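(* Let $\mathcal{H}$ be a complex Hilbert space, $A\in\mathcal{B}(\mathcal{H})$ positive and $S\in\mathcal{B}_A(\mathcal{H})$. Then $$d\omega_A^2(S)\le\left\|SS^{\sharp_A}+\left(S^{\sharp_A}S\right)^2\right\|_A^{1/2}\left\|S^{\sharp_A}S+\left(S^{\sharp_A}S\right)^2\right\|_A^{1/2}.$$
   Context: $\mathcal{B}(\mathcal{H})$ denotes the bounded linear operators on $\mathcal{H}$. For positive $A$, $\langle x,z\rangle_A=\langle Ax,z\rangle$ and $\|z\|_A=\|A^{1/2}z\|$. $\mathcal{B}_A(\mathcal{H})$ is the set of $S\in\mathcal{B}(\mathcal{H})$ for which some $R\in\mathcal{B}(\mathcal{H})$ satisfies $AR=S^*A$; for such $S$, $S^{\sharp_A}=A^{\dagger}S^*A$ with $A^\dagger$ the Moore–Penrose inverse of $A$. For operators $T$ bounded with respect to $\|\cdot\|_A$: $\|T\|_A=\sup_{\|z\|_A=1}\|Tz\|_A$ and $d\omega_A(T)=\sup_{\|z\|_A=1}(|\langle Tz,z\rangle_A|^2+\|Tz\|_A^4)^{1/2}$. *)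

(* Defs.v *)
From HB Require Import structures.
From mathcomp Require Import all_boot all_order all_algebra.
From mathcomp Require Import boolp classical_sets reals.
From mathcomp Require Export complex.
Set Implicit Arguments. Unset Strict Implicit. Unset Printing Implicit Defensive.
Import Order.TTheory GRing.Theory Num.Theory.
Local Open Scope ring_scope.
Local Open Scope classical_set_scope.

Definition inner_product (R : realType) (V : lmodType R[i])
  (ip : V -> V -> R[i]) : Prop :=
  [/\ (forall (a : R[i]) (x y z : V), ip (a *: x + y) z = a * ip x z + ip y z),
      (forall x y : V, ip y x = (ip x y)^*),
      (forall x : V, 0 <= ip x x) &
      (forall x : V, ip x x = 0 -> x = 0)].

Definition hnorm (R : realType) (V : lmodType R[i]) (ip : V -> V -> R[i])
  (x : V) : R := Num.sqrt (@complex.Re R (ip x x)).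

Definition complete_ip (R : realType) (V : lmodType R[i])
  (ip : V -> V -> R[i]) : Prop :=
  forall u : nat -> V,
    (forall e : R, 0 < e -> exists N : nat, forall m n : nat,
        (N <= m)%N -> (N <= n)%N -> hnorm ip (u m - u n) < e) ->
    exists l : V, forall e : R, 0 < e -> exists N : nat, forall n : nat,
        (N <= n)%N -> hnorm ip (u n - l) < e.

Definition bounded_op (R : realType) (V : lmodType R[i]) (ip : V -> V -> R[i])
  (T : V -> V) : Prop :=
  (forall (a : R[i]) (x y : V), T (a *: x + y) = a *: T x + T y) /\
  exists M : R, forall x : V, hnorm ip (T x) <= M * hnorm ip x.

Definition positive_op (R : realType) (V : lmodType R[i]) (ip : V -> V -> R[i])
  (A : V -> V) : Prop :=
  bounded_op ip A /\ forall x : V, 0 <= ip (A x) x.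

Definition is_adjoint (R : realType) (V : lmodType R[i]) (ip : V -> V -> R[i])
  (T Ts : V -> V) : Prop :=
  forall x y : V, ip (T x) y = ip x (Ts y).

(* S in B_A(H): some R in B(H) satisfies A R = S^* A  (Sadj is the adjoint S^* of S). *)
Definition in_BA (R : realType) (V : lmodType R[i]) (ip : V -> V -> R[i])
  (A Sadj : V -> V) : Prop :=
  exists Rop : V -> V, bounded_op ip Rop /\ forall x : V, A (Rop x) = Sadj (A x).

(* Graph of the Moore--Penrose inverse A^+ of A:
   mp_graph A y x  <->  y is in D(A^+) = R(A) (+) R(A)^perp and x = A^+ y,
   i.e. x in N(A)^perp and y - A x in R(A)^perp. *)
Definition mp_graph (R : realType) (V : lmodType R[i]) (ip : V -> V -> R[i])
  (A : V -> V) (y x : V) : Prop :=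
  (forall n : V, A n = 0 -> ip x n = 0) /\
  (forall w : V, ip (y - A x) (A w) = 0).

Definition ipA (R : realType) (V : lmodType R[i]) (ip : V -> V -> R[i])
  (A : V -> V) (x z : V) : R[i] := ip (A x) z.

Definition normA (R : realType) (V : lmodType R[i]) (ip : V -> V -> R[i])
  (A : V -> V) (z : V) : R := Num.sqrt (@complex.Re R (ip (A z) z)).

Definition opnormA (R : realType) (V : lmodType R[i]) (ip : V -> V -> R[i])
  (A T : V -> V) : R :=
  sup [set normA ip A (T z) | z in [set z | normA ip A z = 1]].

Definition dwA (R : realType) (V : lmodType R[i]) (ip : V -> V -> R[i])
  (A T : V -> V) : R :=
  sup [set Num.sqrt (@Normc.normc R (ipA ip A (T z) z) ^+ 2 + normA ip A (T z) ^+ 4)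
      | z in [set z | normA ip A z = 1]].

(* Main.v *)
Require Import Defs.
From HB Require Import structures.
From mathcomp Require Import all_boot all_order all_algebra.
From mathcomp Require Import boolp classical_sets reals complex ring lra.
Import Order.TTheory GRing.Theory Num.Theory.
Local Open Scope ring_scope.

Section Form.
Variable R : realType.
Variable V : lmodType R[i].
Variable f : V -> V -> R[i].
Hypothesis flin : forall (a : R[i]) x y z, f (a *: x + y) z = a * f x z + f y z.
Hypothesis fherm : forall x y, f y x = (f x y)^*.
Hypothesis fpos : forall x, 0 <= f x x.

Lemma fDl x y z : f (x + y) z = f x z + f y z.
Proof. by have := flin 1 x y z; rewrite scale1r mul1r. Qed.
Lemma fZl a x z : f (a *: x) z = a * f x z.
Proof.
have h0 : f 0 z = 0.
  have := flin 1 0 0 z; rewrite scale1r addr0 mul1r => /eqP.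
  rewrite -subr_eq0 opprD addrA subrr add0r oppr_eq0. by move/eqP.
by have := flin a x 0 z; rewrite addr0 h0 addr0.
Qed.
Lemma f0l z : f 0 z = 0.
Proof. by have := fZl 0 0 z; rewrite scale0r mul0r. Qed.
Lemma fNl x z : f (- x) z = - f x z.
Proof. by rewrite -scaleN1r fZl mulN1r. Qed.
Lemma fBl x y z : f (x - y) z = f x z - f y z.
Proof. by rewrite fDl fNl. Qed.
Lemma fDr x y z : f z (x + y) = f z x + f z y.
Proof. by rewrite fherm fDl rmorphD /= -!fherm. Qed.
Lemma fZr a x z : f z (a *: x) = a^* * f z x.
Proof. by rewrite fherm fZl rmorphM /= -!fherm. Qed.
Lemma fNr x z : f z (- x) = - f z x.
Proof. by rewrite fherm fNl rmorphN /= -!fherm. Qed.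
Lemma fBr x y z : f z (x - y) = f z x - f z y.
Proof. by rewrite fDr fNr. Qed.
Lemma f_conj x : (f x x)^* = f x x.
Proof. exact/conj_Creal/ger0_real. Qed.

Lemma CS_aux x y : f y y != 0 -> `|f x y| ^+ 2 <= f x x * f y y.
Proof.
move=> ha.
have hpos : 0 < f y y by rewrite lt_def ha fpos.
set a := f y y; set c := f x y; set P := f x x.
have := fpos (a *: x - c *: y).
have ca : a^* = a by exact: f_conj.
have E : f (a *: x - c *: y) (a *: x - c *: y) = a * (a * P - c * c^*).
  rewrite !(fBl, fZl, fBr, fZr) ca -/a -/c -/P.
  rewrite (fherm x y) -/c. ring.
rewrite E pmulr_rge0 // subr_ge0 normCK mulrC => h.
by rewrite [_ * a]mulrC.
Qed.

Lemma CS_C x y : `|f x y| ^+ 2 <= f x x * f y y.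
Proof.
have [ha|ha] := eqVneq (f y y) 0; last exact: CS_aux.
have [hP|hP] := eqVneq (f x x) 0; last first.
  have := CS_aux y x hP. by rewrite (fherm x y) norm_conjC mulrC.
have := fpos (x - f x y *: y).
set c := f x y.
have E : f (x - c *: y) (x - c *: y) = - (c * c^*) *+ 2.
  rewrite !(fBl, fZl, fBr, fZr) ha hP -/c (fherm x y) -/c. ring.
rewrite E -normCK => h.
rewrite ha hP mulr0 -oppr_ge0.
by rewrite -(pmulrn_lge0 _ (isT : (0 < 2)%N)).
Qed.
End Form.

Section Polar.
Variable R : realType.
Variable V : lmodType R[i].
Variable g : V -> V -> R[i].
Hypothesis gDl : forall x y z, g (x + y) z = g x z + g y z.
Hypothesis gZl : forall a x z, g (a *: x) z = a * g x z.
Hypothesis gDr : forall x y z, g z (x + y) = g z x + g z y.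
Hypothesis gZr : forall a x z, g z (a *: x) = a^* * g z x.
Hypothesis g0 : forall x, g x x = 0.
Lemma polar0 x y : g x y = 0.
Proof.
have h1 := g0 (x + y).
rewrite gDl !gDr !g0 add0r addr0 in h1.
have h2 := g0 (x + 'i *: y).
rewrite gDl !gDr !gZl !gZr !g0 conjCi !mulr0 add0r addr0 in h2.
have e : g y x = - g x y by apply/eqP; rewrite -subr_eq0 opprK addrC h1.
rewrite e in h2.
have : - ('i * (g x y *+ 2)) = 0 by rewrite -h2; ring.
move/eqP; rewrite oppr_eq0 => /eqP.
move/eqP; rewrite mulf_eq0 (negPf (neq0Ci _)) /= mulrn_eq0 /=.
by move/eqP.
Qed.
End Polar.

Section Conv.
Variable R : realType.
Lemma ge0_C (c : R[i]) : 0 <= c -> c = (complex.Re c)%:C%C.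
Proof. by move=> h; rewrite RRe_real // ger0_real. Qed.
Lemma normc_C (c : R[i]) : `|c| = (Normc.normc c)%:C%C.
Proof. by []. Qed.
Lemma Re_le_normc (c : R[i]) : complex.Re c <= Normc.normc c.
Proof.
case: c => a b /=.
apply: (le_trans (ler_norm a)).
rewrite -sqrtr_sqr ler_wsqrtr // lerDl sqr_ge0 //.
Qed.
Lemma normc_ge0 (c : R[i]) : 0 <= Normc.normc c.
Proof. by case: c => a b /=; rewrite sqrtr_ge0. Qed.
Lemma Re_conj (c : R[i]) : complex.Re (c^*) = complex.Re c.
Proof. by case: c. Qed.
End Conv.
Arguments ge0_C {R} [c].
Arguments normc_C {R}.
Arguments Re_le_normc {R}.
Arguments normc_ge0 {R}.
Arguments Re_conj {R}.


Section RealIter.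
Variable R : realType.
Lemma bernoulli (x : R) n : 0 <= x -> 1 + x *+ n <= (1 + x) ^+ n.
Proof.
move=> hx; elim: n => [|n IH]; first by rewrite mulr0n addr0 expr0.
rewrite exprS mulrSr.
have h1 : 0 <= x *+ n by rewrite mulrn_wge0.
apply: (le_trans _ (ler_wpM2l _ IH)); last by rewrite addr_ge0.
have : 0 <= x * (x *+ n) by rewrite mulr_ge0.
rewrite mulrDl mul1r mulrDr mulr1.
lra.
Qed.

Lemma iter_bound (r s D e : R) : 0 <= r -> 0 <= s -> 0 <= e ->
  (forall k, r ^+ (2 ^ k) <= D * e ^+ (2 ^ k) * s ^+ (2 ^ k).-1) -> r <= e * s.
Proof.
move=> hr hs he hk.
rewrite leNgt; apply/negP => hlt.
set t := e * s in hlt.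
have ht : 0 <= t by rewrite mulr_ge0.
have hk' : forall k, r ^+ (2 ^ k) <= (D * e) * t ^+ (2 ^ k).-1.
  move=> k; have := hk k.
  have hN : (2 ^ k = (2 ^ k).-1.+1)%N by rewrite prednK // expn_gt0.
  by rewrite {2}hN exprS /t exprMn mulrA mulrA.
have [t0|tpos] := eqVneq t 0.
  have := hk' 1%N; rewrite t0 expn1 /= expr1 mulr0.
  have : 0 < r ^+ 2 by rewrite exprn_gt0 // -t0.
  move=> h1 h2; have := lt_le_trans h1 h2; by rewrite ltxx.
have tp : 0 < t by rewrite lt_def tpos ht.
have rp : 0 < r by apply: le_lt_trans hlt.
set rho := r / t.
have hrho : 1 < rho by rewrite /rho ltr_pdivlMr // mul1r.
have hk2 : forall k, r * rho ^+ (2 ^ k).-1 <= D * e.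
  move=> k; have := hk' k.
  have hN : (2 ^ k = (2 ^ k).-1.+1)%N by rewrite prednK // expn_gt0.
  rewrite {1}hN exprSr => h.
  rewrite -(ler_pM2r (exprn_gt0 (2 ^ k).-1 tp)) /rho -mulrA -exprMn divfK //.
  by rewrite mulrC.
have hk3 : forall k, r * ((rho - 1) *+ k) <= D * e.
  move=> k; apply: le_trans (hk2 k).
  rewrite ler_pM2l //.
  have hkle : (k <= (2 ^ k).-1)%N by rewrite -ltnS prednK ?expn_gt0 // ltn_expl.
  apply: (le_trans (y := 1 + (rho - 1) *+ (2 ^ k).-1)).
    apply: (le_trans (y := (rho - 1) *+ (2 ^ k).-1)).
      rewrite -(mulr_natr (rho - 1) k) -(mulr_natr (rho - 1) (2 ^ k).-1).
      rewrite ler_wpM2l //. by rewrite subr_ge0 ltW. by rewrite ler_nat.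
    by rewrite lerDr.
  have h0 : 0 <= rho - 1 by rewrite subr_ge0 ltW.
  have := @bernoulli (rho - 1) (2 ^ k).-1 h0.
  by rewrite addrCA subrr addr0.
set M := (D * e) / (r * (rho - 1)).
have hpos : 0 < r * (rho - 1) by rewrite mulr_gt0 // subr_gt0.
have M0 : 0 <= M.
  have hDe : 0 <= D * e by have := hk3 0%N; rewrite mulr0n mulr0.
  by rewrite /M divr_ge0 // ltW.
have := archi_boundP M0.
set k := Num.Def.archi_bound M => hM.
have := hk3 k.
rewrite -mulr_natr mulrA -ler_pdivlMl // mulrC -/M.
by rewrite leNgt hM.
Qed.
End RealIter.

Section RealAux.
Variable R : realType.
Lemma sq_le (a b : R) : 0 <= b -> a ^+ 2 <= b ^+ 2 -> a <= b.
Proof.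
move=> hb h; apply: (le_trans (ler_norm a)).
by rewrite -sqrtr_sqr -(ger0_norm hb) -(sqrtr_sqr b) ler_wsqrtr.
Qed.
Lemma le_sqrt_mul (a b c : R) : 0 <= b -> a ^+ 2 <= b * c -> a <= Num.sqrt b * Num.sqrt c.
Proof.
move=> hb h; apply: (le_trans (ler_norm a)).
by rewrite -sqrtr_sqr -sqrtrM // ler_wsqrtr.
Qed.
Lemma sq_mono (a b : R) : 0 <= a -> a <= b -> a ^+ 2 <= b ^+ 2.
Proof.
move=> ha hab; apply: lerXn2r => //; rewrite qualifE //; exact: le_trans hab.
Qed.
Lemma ReD (a b : R[i]) : complex.Re (a + b) = complex.Re a + complex.Re b.
Proof. by case: a; case: b. Qed.
Lemma ReB (a b : R[i]) : complex.Re (a - b) = complex.Re a - complex.Re b.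
Proof. by case: a; case: b. Qed.
Lemma Re_ge0 (a : R[i]) : 0 <= a -> 0 <= complex.Re a.
Proof. by move=> h; move: (h); rewrite (ge0_C h) lecR. Qed.
Lemma CS_R (a b c : R[i]) : 0 <= a -> 0 <= b -> `|c| ^+ 2 <= a * b ->
  Normc.normc c ^+ 2 <= complex.Re a * complex.Re b.
Proof.
move=> ha hb; rewrite (ge0_C ha) (ge0_C hb) normc_C -!rmorphXn -rmorphM lecR.
by [].
Qed.
Lemma normc_conj (a : R[i]) : Normc.normc (a^*) = Normc.normc a.
Proof. by apply: complexI; rewrite -!normc_C norm_conjC. Qed.
End RealAux.
Arguments sq_le {R a b}. Arguments le_sqrt_mul {R a b c}. Arguments sq_mono {R a b}.
Arguments ReD {R}. Arguments ReB {R}. Arguments Re_ge0 {R}. Arguments CS_R {R}. Arguments normc_conj {R}.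
Arguments iter_bound {R}. Arguments bernoulli {R}.

Arguments fDl {R V f}. Arguments fZl {R V f}. Arguments f0l {R V f}.
Arguments fNl {R V f}. Arguments fBl {R V f}. Arguments fDr {R V f}.
Arguments fZr {R V f}. Arguments fNr {R V f}. Arguments fBr {R V f}.
Arguments f_conj {R V f}. Arguments CS_C {R V f}.

Section LinMap.
Variable R : realType.
Variable V : lmodType R[i].
Variable L : V -> V.
Hypothesis hL : forall (a : R[i]) x y, L (a *: x + y) = a *: L x + L y.
Lemma linD x y : L (x + y) = L x + L y.
Proof. by have := hL 1 x y; rewrite !scale1r. Qed.
Lemma lin0 : L 0 = 0.
Proof.
have := hL 1 0 0; rewrite scale1r addr0 scale1r.
by move/(congr1 (fun v => v - L 0)); rewrite subrr addrK.
Qed.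
Lemma linZ a x : L (a *: x) = a *: L x.
Proof. by have := hL a x 0; rewrite addr0 lin0 addr0. Qed.
Lemma linN x : L (- x) = - L x.
Proof. by rewrite -scaleN1r linZ scaleN1r. Qed.
Lemma linB x y : L (x - y) = L x - L y.
Proof. by rewrite linD linN. Qed.
End LinMap.
Arguments linD {R V L}. Arguments lin0 {R V L}. Arguments linZ {R V L}.
Arguments linN {R V L}. Arguments linB {R V L}.

Section Main.
Variable R : realType.
Variable V : lmodType R[i].
Variable ip : V -> V -> R[i].
Variables A S Sadj T : V -> V.
Hypothesis hip : inner_product ip.
Hypothesis hA : positive_op ip A.
Hypothesis hS : bounded_op ip S.
Hypothesis hadj : is_adjoint ip S Sadj.
Hypothesis hBA : in_BA ip A Sadj.
Hypothesis hmp : forall z, mp_graph ip A (Sadj (A z)) (T z).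

Lemma ipl a x y z : ip (a *: x + y) z = a * ip x z + ip y z.
Proof. by case: hip. Qed.
Lemma iph x y : ip y x = (ip x y)^*.
Proof. by case: hip. Qed.
Lemma ipp x : 0 <= ip x x.
Proof. by case: hip. Qed.
Lemma ipd x : ip x x = 0 -> x = 0.
Proof. by case: hip => _ _ _; apply. Qed.
Lemma Alin a x y : A (a *: x + y) = a *: A x + A y.
Proof. by case: hA => [[]]. Qed.
Lemma Apos x : 0 <= ip (A x) x.
Proof. by case: hA. Qed.

Lemma Asa x y : ip (A x) y = ip x (A y).
Proof.
apply/eqP; rewrite -subr_eq0; apply/eqP.
apply: (@polar0 R V (fun x y => ip (A x) y - ip x (A y))) => /=.
- move=> u v w; rewrite (linD Alin) (fDl ipl) (fDl ipl); ring.
- move=> a u w; rewrite (linZ Alin) (fZl ipl) (fZl ipl); ring.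
- move=> u v w; rewrite (fDr ipl iph) (linD Alin) (fDr ipl iph); ring.
- move=> a u w; rewrite (fZr ipl iph) (linZ Alin) (fZr ipl iph); ring.
- move=> u; rewrite (iph (A u) u) conj_Creal ?subrr //; exact/ger0_real/Apos.
Qed.

Definition p u v := ip (A u) v.
Lemma pl a x y z : p (a *: x + y) z = a * p x z + p y z.
Proof. by rewrite /p Alin ipl. Qed.
Lemma ph x y : p y x = (p x y)^*.
Proof. by rewrite /p Asa iph. Qed.
Lemma pp x : 0 <= p x x.
Proof. exact: Apos. Qed.

Lemma AT u : A (T u) = Sadj (A u).
Proof.
case: hBA => Rop [_ hR].
have [_ h2] := hmp u.
set d := Rop u - T u.
have hd : ip (A d) (A d) = 0.
  by have := h2 d; rewrite /d (linB Alin) hR.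
have := ipd (A d) hd; rewrite /d (linB Alin) => /eqP; rewrite subr_eq0 => /eqP.
by rewrite hR.
Qed.

Lemma pT u v : p (T u) v = p u (S v).
Proof.
rewrite /p AT iph -hadj -Asa.
by rewrite -/(p (S v) u) -ph.
Qed.

Definition n2 x := complex.Re (ip x x).
Definition q u := complex.Re (p u u).
Lemma n2_ge0 x : 0 <= n2 x. Proof. exact/Re_ge0/ipp. Qed.
Lemma q_ge0 x : 0 <= q x. Proof. exact/Re_ge0/pp. Qed.
Lemma hnormE x : hnorm ip x = Num.sqrt (n2 x). Proof. by []. Qed.

Lemma CSip x y : Normc.normc (ip x y) ^+ 2 <= n2 x * n2 y.
Proof. exact: (CS_R _ _ _ (ipp x) (ipp y) (CS_C ipl iph ipp x y)). Qed.
Lemma CSp x y : Normc.normc (p x y) ^+ 2 <= q x * q y.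
Proof. exact: (CS_R _ _ _ (pp x) (pp y) (CS_C pl ph pp x y)). Qed.

Lemma bound_sq (L : V -> V) M : (forall x, hnorm ip (L x) <= M * hnorm ip x) ->
  forall x, n2 (L x) <= M ^+ 2 * n2 x.
Proof.
move=> h x; have := h x; rewrite !hnormE => hx.
have := sq_mono (sqrtr_ge0 _) hx.
by rewrite exprMn !sqr_sqrtr ?n2_ge0.
Qed.

Lemma q_le_n2 : exists K, 0 <= K /\ forall u, q u <= K * n2 u.
Proof.
case: hA => [[_ [M hM]] _].
exists `|M|; split => // u.
apply: (le_trans (Re_le_normc _)).
have h1 := CSip (A u) u.
have h2 : Normc.normc (ip (A u) u) <= Num.sqrt (n2 (A u)) * Num.sqrt (n2 u).
  by apply: le_sqrt_mul => //; exact: n2_ge0.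
apply: (le_trans h2).
have := hM u; rewrite !hnormE => h3.
apply: (le_trans (ler_wpM2r (sqrtr_ge0 _) h3)).
rewrite -mulrA -expr2 sqr_sqrtr ?n2_ge0 //.
by rewrite ler_wpM2r ?n2_ge0 // ler_norm.
Qed.

Lemma qD_le x y : q (x + y) <= 2 * (q x + q y).
Proof.
have E : p (x + y) (x + y) + p (x - y) (x - y) = 2 * (p x x + p y y).
  rewrite !(fDl pl, fNl pl, fDr pl ph, fNr pl ph); ring.
have := congr1 (@complex.Re R) E.
rewrite ReD -/(q (x + y)) -/(q (x - y)).
have -> : complex.Re (2 * (p x x + p y y)) = 2 * (q x + q y).
  by rewrite /q; case: (p x x); case: (p y y) => /= *; ring.
move=> <-; rewrite lerDl; exact: q_ge0.
Qed.

Lemma qS_bound : exists b, 0 <= b /\ forall u, q (S u) <= b * q u.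
Proof.
case: hBA => Rop [hRb hR].
case: hRb => [_ [MR hMR]]; case: hS => [_ [MS hMS]].
pose B := fun u => Rop (S u).
have pB x y : p (B x) y = p (S x) (S y).
  rewrite /p /B hR iph -hadj -Asa.
  by rewrite -/(p (S y) (S x)) -ph.
have pBs x y : p (B x) y = p x (B y) by rewrite pB (ph (B y) x) pB -ph.
have pBk k x y : p (iter k B x) y = p x (iter k B y).
  elim: k x y => [//|k IH] x y.
  by rewrite iterS pBs IH -iterSr.
pose c := MR ^+ 2 * MS ^+ 2.
have c0 : 0 <= c by rewrite mulr_ge0 ?sqr_ge0.
have n2B x : n2 (B x) <= c * n2 x.
  apply: (le_trans (bound_sq _ _ hMR (S x))).
  rewrite /c -mulrA ler_wpM2l ?sqr_ge0 //; exact: bound_sq _ _ hMS x.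
have n2Bk k x : n2 (iter k B x) <= c ^+ k * n2 x.
  elim: k => [|k IH]; first by rewrite expr0 mul1r.
  rewrite iterS; apply: (le_trans (n2B _)).
  by rewrite exprS -mulrA ler_wpM2l.
have [K [K0 hK]] := q_le_n2.
have qstep m u : q (iter m B u) ^+ 2 <= q u * q (iter (m + m) B u).
  have E : q (iter m B u) = complex.Re (p u (iter (m + m) B u)).
    by rewrite /q pBk -iterD.
  apply: le_trans (CSp _ _).
  apply: sq_mono; first exact: q_ge0.
  rewrite E; exact: Re_le_normc.
have qpow k u : q (B u) ^+ (2 ^ k) <= q (iter (2 ^ k) B u) * q u ^+ (2 ^ k).-1.
  elim: k => [|k IH]; first by rewrite expn0 expr1 expr0 mulr1.
  have hN : (2 ^ k.+1 = 2 ^ k + 2 ^ k)%N by rewrite expnS mul2n addnn.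
  have hN1 : ((2 ^ k + 2 ^ k).-1 = ((2 ^ k).-1 + (2 ^ k).-1).+1)%N.
    have : (0 < 2 ^ k)%N by rewrite expn_gt0.
    by case: (2 ^ k)%N => // n _; rewrite addSn addnS.
  rewrite hN exprD.
  apply: (le_trans (y := (q (iter (2 ^ k) B u) * q u ^+ (2 ^ k).-1) ^+ 2)).
    by rewrite expr2; apply: ler_pM => //; apply: exprn_ge0; exact: q_ge0.
  rewrite exprMn.
  apply: (le_trans (ler_wpM2r (sqr_ge0 _) (qstep _ u))).
  have -> : q (iter (2 ^ k + 2 ^ k) B u) * q u ^+ (2 ^ k + 2 ^ k).-1 =
      q u * q (iter (2 ^ k + 2 ^ k) B u) * (q u ^+ (2 ^ k).-1) ^+ 2.
    rewrite hN1 exprS exprD expr2; ring.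
  by [].
exists (Num.sqrt c); split; first exact: sqrtr_ge0.
move=> u.
have qB : q (B u) <= c * q u.
  apply: (iter_bound _ _ (K * n2 u)); [exact: q_ge0 | exact: q_ge0 | exact: c0 |].
  move=> k; apply: (le_trans (qpow k u)).
  apply: ler_wpM2r; first by apply: exprn_ge0; exact: q_ge0.
  apply: (le_trans (hK _)).
  rewrite -mulrA ler_wpM2l // mulrC; exact: n2Bk.
have -> : q (S u) = complex.Re (p (B u) u) by rewrite /q pB.
apply: (le_trans (Re_le_normc _)).
apply: (le_trans (le_sqrt_mul (q_ge0 _) (CSp _ _))).
apply: (le_trans (ler_wpM2r (sqrtr_ge0 _) (ler_wsqrtr qB))).
rewrite sqrtrM // -mulrA -expr2 sqr_sqrtr //; exact: q_ge0.
Qed.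

Lemma qT_bound b : 0 <= b -> (forall u, q (S u) <= b * q u) ->
  forall z, q (T z) <= b * q z.
Proof.
move=> b0 hb z.
have h : q (T z) ^+ 2 <= (b * q z) * q (T z).
  have E : q (T z) = complex.Re (p z (S (T z))) by rewrite /q pT.
  have h1 : q (T z) <= Normc.normc (p z (S (T z))) by rewrite {1}E; exact: Re_le_normc.
  apply: (le_trans (sq_mono (q_ge0 _) h1)).
  apply: (le_trans (CSp _ _)).
  rewrite [b * _]mulrC -mulrA ler_wpM2l ?q_ge0 //.
have [->|hq] := eqVneq (q (T z)) 0; first by rewrite mulr_ge0 ?q_ge0.
have qp : 0 < q (T z) by rewrite lt_def hq q_ge0.
by move: h; rewrite expr2 ler_pM2r.
Qed.

Definition unitA z := normA ip A z = 1.
Lemma unitA_q z : unitA z -> q z = 1.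
Proof.
rewrite /unitA /normA => h.
by rewrite -/(q z) -[q z]sqr_sqrtr ?q_ge0 // h expr1n.
Qed.

Lemma opnorm_ub (M : V -> V) K : (forall z, q (M z) <= K * q z) ->
  forall z, unitA z -> normA ip A (M z) <= opnormA ip A M.
Proof.
move=> hM z hz; apply: sup_upper_bound; last by exists z.
split; first by exists (normA ip A (M z)); exists z.
exists (Num.sqrt K) => y [w hw <-].
rewrite /normA ler_wsqrtr //.
by have := hM w; rewrite (unitA_q w hw) mulr1.
Qed.

Lemma Re_p_M1 z : complex.Re (p (S (T z) + T (S (T (S z)))) z) = q (T z) + q (T (S z)).
Proof.
rewrite (fDl pl) ReD.
rewrite (ph z (S (T z))) -(pT z (T z)) Re_conj.
rewrite (pT (S (T (S z))) z) (ph (S z) (S (T (S z)))) -(pT (S z) (T (S z))) Re_conj //.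
Qed.
Lemma Re_p_M2 z : complex.Re (p (T (S z) + T (S (T (S z)))) z) = q (S z) + q (T (S z)).
Proof.
rewrite (fDl pl) ReD.
rewrite (pT (S z) z).
rewrite (pT (S (T (S z))) z) (ph (S z) (S (T (S z)))) -(pT (S z) (T (S z))) Re_conj //.
Qed.

Lemma Re_p_le_normA (M : V -> V) z : unitA z ->
  complex.Re (p (M z) z) <= normA ip A (M z).
Proof.
move=> hz; apply: (le_trans (Re_le_normc _)).
have := le_sqrt_mul (q_ge0 _) (CSp (M z) z).
by rewrite (unitA_q z hz) sqrtr1 mulr1.
Qed.

Local Open Scope classical_set_scope.
Theorem main_ineq :
  dwA ip A S ^+ 2 <=
    Num.sqrt (opnormA ip A (fun z => S (T z) + T (S (T (S z))))) *
    Num.sqrt (opnormA ip A (fun z => T (S z) + T (S (T (S z))))).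
Proof.
have [b [b0 hb]] := qS_bound.
have hT := qT_bound b b0 hb.
set M1 := (fun z => S (T z) + T (S (T (S z)))).
set M2 := (fun z => T (S z) + T (S (T (S z)))).
set o1 := opnormA ip A M1; set o2 := opnormA ip A M2.
pose K := 2 * (b ^+ 2 + b ^+ 4).
have hS2 z : q (S (T z)) <= b ^+ 2 * q z.
  apply: (le_trans (hb _)); rewrite expr2 -mulrA ler_wpM2l //.
have hTSTS z : q (T (S (T (S z)))) <= b ^+ 4 * q z.
  apply: (le_trans (hT _)); rewrite (exprS b 3) -mulrA ler_wpM2l //.
  apply: (le_trans (hb _)); rewrite (exprS b 2) -mulrA ler_wpM2l //.
  apply: (le_trans (hT _)); rewrite expr2 -mulrA ler_wpM2l //.
have hM1 z : q (M1 z) <= K * q z.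
  apply: (le_trans (qD_le _ _)); rewrite /K -mulrA ler_wpM2l // mulrDl.
  by apply: lerD.
have hM2 z : q (M2 z) <= K * q z.
  apply: (le_trans (qD_le _ _)); rewrite /K -mulrA ler_wpM2l // mulrDl.
  apply: lerD => //.
  apply: (le_trans (hT _)); rewrite expr2 -mulrA ler_wpM2l //.
pose W := Num.sqrt (Num.sqrt o1 * Num.sqrt o2).
have pw : forall z, unitA z ->
    Num.sqrt (Normc.normc (ipA ip A (S z) z) ^+ 2 + normA ip A (S z) ^+ 4) <= W.
  move=> z hz.
  have qz := unitA_q z hz.
  have o1ge : complex.Re (p (M1 z) z) <= o1.
    apply: (le_trans (Re_p_le_normA M1 z hz)); exact: (opnorm_ub _ _ hM1 z hz).
  have o2ge : complex.Re (p (M2 z) z) <= o2.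
    apply: (le_trans (Re_p_le_normA M2 z hz)); exact: (opnorm_ub _ _ hM2 z hz).
  rewrite /M1 Re_p_M1 in o1ge; rewrite /M2 Re_p_M2 in o2ge.
  have -> : ipA ip A (S z) z = p (S z) z by [].
  have -> : normA ip A (S z) ^+ 4 = q (S z) ^+ 2.
    by rewrite /normA -/(q (S z)) (exprM _ 2 2) sqr_sqrtr ?q_ge0.
  set X := Normc.normc (p (S z) z) ^+ 2.
  set a := q (S z); set bb := q (T z); set d := q (T (S z)).
  have a0 : 0 <= a by exact: q_ge0.
  have bb0 : 0 <= bb by exact: q_ge0.
  have d0 : 0 <= d by exact: q_ge0.
  have X0 : 0 <= X by exact: sqr_ge0.
  have Xa : X <= a by have := CSp (S z) z; rewrite qz mulr1.
  have Xb : X <= bb.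
    have := CSp (T z) z; rewrite qz mulr1 /X.
    by rewrite pT (ph z (S z)) normc_conj.
  have hX : X <= Num.sqrt a * Num.sqrt bb.
    apply: le_sqrt_mul => //; rewrite expr2; exact: ler_pM.
  have hY : a ^+ 2 <= d.
    have E : a = complex.Re (p (T (S z)) z) by rewrite pT.
    have h1 : a <= Normc.normc (p (T (S z)) z) by rewrite {1}E; exact: Re_le_normc.
    apply: (le_trans (sq_mono a0 h1)).
    by have := CSp (T (S z)) z; rewrite qz mulr1.
  have sa := sqrtr_ge0 a; have sb := sqrtr_ge0 bb.
  have ea := sqr_sqrtr a0; have eb := sqr_sqrtr bb0.
  have hSig : (X + a ^+ 2) ^+ 2 <= (bb + d) * (a + d).
    set al := Num.sqrt a in hX sa ea; set ga := Num.sqrt bb in hX sb eb.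
    have h6 : (al * ga) ^+ 2 = a * bb by rewrite exprMn ea eb.
    have h7 : (al ^+ 2 + ga ^+ 2) * d = (a + bb) * d by rewrite ea eb.
    have h2 : X + a ^+ 2 <= al * ga + d by lra.
    have h3 : 0 <= X + a ^+ 2 by rewrite addr_ge0 // sqr_ge0.
    have h4 : (X + a ^+ 2) ^+ 2 <= (al * ga + d) ^+ 2 by exact: sq_mono h3 h2.
    apply: (le_trans h4).
    have h5 : 0 <= (al - ga) ^+ 2 * d by rewrite mulr_ge0 // sqr_ge0.
    nra.
  have o10 : 0 <= o1 by apply: le_trans o1ge; rewrite addr_ge0.
  have hSig2 : (X + a ^+ 2) ^+ 2 <= o1 * o2.
    apply: (le_trans hSig); apply: ler_pM => //; rewrite addr_ge0 //.
  apply: ler_wsqrtr; apply: le_sqrt_mul => //.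
have [[z0 hz0]|hn] := pselect (exists z, unitA z); last first.
  have -> : dwA ip A S = 0.
    rewrite /dwA; have -> : [set Num.sqrt (Normc.normc (ipA ip A (S z) z) ^+ 2 +
        normA ip A (S z) ^+ 4) | z in [set z | normA ip A z = 1]] = set0.
      apply/seteqP; split => y //= [z hz _]; exfalso; apply: hn; by exists z.
    exact: sup0.
  by rewrite expr0n /= mulr_ge0 ?sqrtr_ge0.
have W0 : 0 <= W by exact: sqrtr_ge0.
have hsup : has_sup [set Num.sqrt (Normc.normc (ipA ip A (S z) z) ^+ 2 +
        normA ip A (S z) ^+ 4) | z in [set z | normA ip A z = 1]].
  split; first by eexists; exists z0.
  by exists W => y [z hz <-]; apply: pw.
have d0 : 0 <= dwA ip A S.
  apply: (le_trans _ (sup_upper_bound hsup _)); last by exists z0.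
  exact: sqrtr_ge0.
have dW : dwA ip A S <= W.
  apply: ge_sup; first by eexists; exists z0.
  by move=> y [z hz <-]; apply: pw.
apply: (le_trans (sq_mono d0 dW)).
rewrite /W sqr_sqrtr // mulr_ge0 ?sqrtr_ge0 //.
Qed.
End Main.

Theorem corollary2p26 (R : realType) (V : lmodType R[i]) (ip : V -> V -> R[i])
  (A S Sadj Ssh : V -> V) :
  inner_product ip -> complete_ip ip ->
  positive_op ip A ->
  bounded_op ip S -> is_adjoint ip S Sadj -> in_BA ip A Sadj ->
  (forall z : V, mp_graph ip A (Sadj (A z)) (Ssh z)) ->
  dwA ip A S ^+ 2 <=
    Num.sqrt (opnormA ip A (fun z => S (Ssh z) + Ssh (S (Ssh (S z))))) *
    Num.sqrt (opnormA ip A (fun z => Ssh (S z) + Ssh (S (Ssh (S z))))).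
Proof.
move=> hip _ hA hS hadj hBA hmp.
exact: (@main_ineq _ _ _ _ _ _ _ hip hA hS hadj hBA hmp).
Qed.
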